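(* Let $q=p^h$ with $p$ an odd prime. In ${\rm PG}(4,q)$ with homogeneous coordinates $(X_1,\dots,X_5)$, let $\pi$ be the plane $X_4=X_5=0$, let $\ell$ be the line $X_3=X_4=X_5=0$, let $\omega$ be a primitive element of ${\rm GF}(q)$, and for $1\le i\le q+1$ let $\Pi_i$ be the solid with equation $X_4=\omega^{i-1}X_5$ if $1\le i\le q-1$, $X_4=0$ if $i=q$, and $X_5=0$ if $i=q+1$. Let $a,b,c\in{\rm GF}(q)$ be such that $X^3+aX^2+bX+c$ is irreducible over ${\rm GF}(q)$, and let $G=\{M_{r,s,t}: r,s,t\in{\rm GF}(q)\}$ where $$M_{r,s,t}=\begin{pmatrix}1&0&r&r^2-ar+s&t\\0&1&s&2rs-t&s^2+bs-cr\\0&0&1&2r&2s\\0&0&0&1&0\\0&0&0&0&1\end{pmatrix},$$ acting on ${\rm PG}(4,q)$ (points written as column vectors) by left multiplication. Then the orbits of $G$ on the lines of ${\rm PG}(4,q)$ distinct from $\ell$ are the following: (a) $q+1$ orbits of size $q$: for each point $P\in\ell$, the set of lines of $\pi$ through $P$ other than $\ell$; (b) $(q+1)^2$ orbits of size $q^2$: for each $i\in\{1,\dots,q+1\}$ and each point $P\in\ell$, the set of lines of $\Pi_i$ through $P$ not contained in $\pi$; (c) $q(q+1)$ orbits of size $q^3$: for each $i$, the lines of $\Pi_i$ that are skew to $\ell$ but meet $\pi$ in a point form $q$ orbits of size $q^3$; (d) $q^3$ orbits of size $q^3$, whose union is the set of lines disjoint from $\pi$. Moreover, each orbit of type (d)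 is a partial line spread, i.e. its lines are pairwise disjoint. *)

(* Defs.v *)
From HB Require Import structures.
From mathcomp Require Import all_boot all_order all_algebra all_field.
Set Implicit Arguments. Unset Strict Implicit. Unset Printing Implicit Defensive.
Import GRing.Theory.
Local Open Scope ring_scope.

(* PG(4,q) over a finite field F: vectors are column vectors 'cV[F]_5,
   coordinates X1..X5 are the entries with (0-based) row indices 0..4.
   A projective subspace is represented by the finite set of vectors of the
   underlying vector subspace (including 0). *)

Notation vec F := 'cV[F]_5.

Definition coord (F : finFieldType) (x : vec F) (k : nat) : F := x (inord k) 0.

Definition span1 (F : finFieldType) (x : vec F) : {set vec F} :=
  [set a *: x | a : F].
Definition span2 (F : finFieldType) (u v : vec F) : {set vec F} :=
  [set a *: u + b *: v | a : F, b : F].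
Definition indep2 (F : finFieldType) (u v : vec F) : bool :=
  [forall a : F, forall b : F, (a *: u + b *: v == 0) ==> (a == 0) && (b == 0)].

Definition points (F : finFieldType) : {set {set vec F}} :=
  [set S | [exists x : vec F, (x != 0) && (S == span1 x)]].
Definition lines (F : finFieldType) : {set {set vec F}} :=
  [set S | [exists u : vec F, exists v : vec F, indep2 u v && (S == span2 u v)]].

(* the zero subspace (empty projective subspace) *)
Definition zero_sp (F : finFieldType) : {set vec F} := [set 0].

Definition pi_pl (F : finFieldType) : {set vec F} :=
  [set x : vec F | (coord x 3 == 0) && (coord x 4 == 0)].
Definition ell (F : finFieldType) : {set vec F} :=
  [set x : vec F | [&& coord x 2 == 0, coord x 3 == 0 & coord x 4 == 0]].

Definition solid (F : finFieldType) (w : F) (i : nat) : {set vec F} :=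
  if (i < #|F|)%N then [set x : vec F | coord x 3 == w ^+ i.-1 * coord x 4]
  else if i == #|F| then [set x : vec F | coord x 3 == 0]
  else [set x : vec F | coord x 4 == 0].

Definition Mrst (F : finFieldType) (a b c r s t : F) : 'M[F]_5 :=
  \matrix_(i < 5, j < 5)
    nth 0 (nth [::]
      [:: [:: 1; 0; r; r ^+ 2 - a * r + s; t];
          [:: 0; 1; s; 2 * r * s - t; s ^+ 2 + b * s - c * r];
          [:: 0; 0; 1; 2 * r; 2 * s];
          [:: 0; 0; 0; 1; 0];
          [:: 0; 0; 0; 0; 1]] i) j.

Definition Gset (F : finFieldType) (a b c : F) : {set 'M[F]_5} :=
  [set g | [exists r : F, exists s : F, exists t : F, g == Mrst a b c r s t]].

Definition act (F : finFieldType) (g : 'M[F]_5) (S : {set vec F}) : {set vec F} :=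
  [set g *m x | x in S].

Definition orbit (F : finFieldType) (a b c : F) (L : {set vec F}) :
  {set {set vec F}} := [set act g L | g in Gset a b c].

Definition line_orbits (F : finFieldType) (a b c : F) : {set {set {set vec F}}} :=
  [set orbit a b c L | L in lines F :\ ell F].

Definition ell_points (F : finFieldType) : {set {set vec F}} :=
  [set P in points F | P \subset ell F].

Definition typeA (F : finFieldType) (P : {set vec F}) : {set {set vec F}} :=
  [set L in lines F | [&& L \subset pi_pl F, P \subset L & L != ell F]].
Definition typeB (F : finFieldType) (w : F) (i : nat) (P : {set vec F}) :
  {set {set vec F}} :=
  [set L in lines F | [&& L \subset solid w i, P \subset L & ~~ (L \subset pi_pl F)]].
Definition typeC (F : finFieldType) (w : F) (i : nat) : {set {set vec F}} :=
  [set L in lines F | [&& L \subset solid w i, L :&: ell F == zero_sp F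
                        & L :&: pi_pl F \in points F]].
Definition typeD (F : finFieldType) : {set {set vec F}} :=
  [set L in lines F | L :&: pi_pl F == zero_sp F].

Definition partial_spread (F : finFieldType) (O : {set {set vec F}}) : Prop :=
  forall L1 L2, L1 \in O -> L2 \in O -> L1 != L2 -> L1 :&: L2 = zero_sp F.

(* Main.v *)
Require Import Defs.
From HB Require Import structures.
From mathcomp Require Import all_boot all_order all_algebra all_field.
Import GRing.Theory.
Local Open Scope ring_scope.
Set Warnings "-notation-overridden,-ambiguous-paths".
From mathcomp Require Import ring zify.

Module MBase.
Set Implicit Arguments. Unset Strict Implicit. Unset Printing Implicit Defensive.
Import GRing.Theory.
Local Open Scope ring_scope.

Set Implicit Arguments. Unset Strict Implicit. Unset Printing Implicit Defensive.

Section Basic.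
Variable F : finFieldType.
Local Notation coord := Defs.coord.
Definition v5 (x0 x1 x2 x3 x4 : F) : vec F :=
  \col_(i < 5) nth 0 [:: x0; x1; x2; x3; x4] i.

Lemma v5E (x : vec F) : x = v5 (coord x 0) (coord x 1) (coord x 2) (coord x 3) (coord x 4).
Proof.
apply/matrixP => i j; rewrite ord1 !mxE /coord.
by case: i => [[|[|[|[|[|i]]]]] Hi] //=; congr (x _ _); apply/val_inj; rewrite /= inordK.
Qed.

Lemma coord_v5 x0 x1 x2 x3 x4 :
  [/\ coord (v5 x0 x1 x2 x3 x4) 0 = x0, coord (v5 x0 x1 x2 x3 x4) 1 = x1,
      coord (v5 x0 x1 x2 x3 x4) 2 = x2, coord (v5 x0 x1 x2 x3 x4) 3 = x3 &
      coord (v5 x0 x1 x2 x3 x4) 4 = x4].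
Proof. by rewrite /coord !mxE !inordK. Qed.

Lemma v5_inj x0 x1 x2 x3 x4 y0 y1 y2 y3 y4 :
  v5 x0 x1 x2 x3 x4 = v5 y0 y1 y2 y3 y4 ->
  [/\ x0 = y0, x1 = y1, x2 = y2, x3 = y3 & x4 = y4].
Proof.
move=> E; have := coord_v5 x0 x1 x2 x3 x4; rewrite E.
by case: (coord_v5 y0 y1 y2 y3 y4) => -> -> -> -> -> [].
Qed.

Lemma v5_comb k l x0 x1 x2 x3 x4 y0 y1 y2 y3 y4 :
  k *: v5 x0 x1 x2 x3 x4 + l *: v5 y0 y1 y2 y3 y4 =
  v5 (k*x0 + l*y0) (k*x1+l*y1) (k*x2+l*y2) (k*x3+l*y3) (k*x4+l*y4).
Proof.
apply/matrixP => i j; rewrite !mxE.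
by case: i => [[|[|[|[|[|i]]]]] Hi].
Qed.

Lemma v5_0 : 0 = v5 0 0 0 0 0.
Proof. by apply/matrixP => i j; rewrite !mxE; case: i => [[|[|[|[|[|i]]]]] Hi]. Qed.

Lemma Mrst_v5 a b c r s t x0 x1 x2 x3 x4 :
  Mrst a b c r s t *m v5 x0 x1 x2 x3 x4 =
  v5 (x0 + r * x2 + (r ^+ 2 - a * r + s) * x3 + t * x4)
     (x1 + s * x2 + (2 * r * s - t) * x3 + (s ^+ 2 + b * s - c * r) * x4)
     (x2 + 2 * r * x3 + 2 * s * x4) x3 x4.
Proof.
apply/matrixP => i j; rewrite !mxE !big_ord_recl big_ord0 !mxE /=.
case: i => [[|[|[|[|[|i]]]]] Hi] //=; ring.
Qed.

Lemma Mrst_mul (a b c r s t r' s' t' : F) :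
  Mrst a b c r s t *m Mrst a b c r' s' t' = Mrst a b c (r + r') (s + s') (t + t' + 2 * r * s').
Proof.
apply/matrixP => i j; rewrite !mxE !big_ord_recl big_ord0 !mxE /=.
case: i => [[|[|[|[|[|i]]]]] Hi] //=; case: j => [[|[|[|[|[|j]]]]] Hj] //=; ring.
Qed.
End Basic.
Section S.
Variable F : finFieldType.
Implicit Types u v x y : vec F.
Lemma span2P u v x : reflect (exists k l, x = k *: u + l *: v) (x \in span2 u v).
Proof.
apply: (iffP imset2P) => [[k l _ _ ->]|[k [l ->]]]; first by exists k, l.
by exists k l.
Qed.
Lemma span1P u x : reflect (exists k, x = k *: u) (x \in span1 u).
Proof. by apply: (iffP imsetP) => [[k _ ->]|[k ->]]; exists k. Qed.
Lemma indep2P u v :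
  reflect (forall k l, k *: u + l *: v = 0 -> k = 0 /\ l = 0) (indep2 u v).
Proof.
apply: (iffP forallP) => [H k l E|H k].
  by move: (H k) => /forallP /(_ l) /implyP; rewrite E eqxx => /(_ isT) /andP [/eqP -> /eqP ->].
apply/forallP => l; apply/implyP => /eqP /H [-> ->]; by rewrite eqxx.
Qed.
Lemma card_span2 u v : indep2 u v -> #|span2 u v| = (#|F| ^ 2)%N.
Proof.
move/indep2P => H.
have -> : span2 u v = [set p.1 *: u + p.2 *: v | p : F * F].
  apply/setP => z; apply/span2P/imsetP => [[k [l ->]]|[[k l] _ ->]]; first by exists (k, l).
  by exists k, l.
rewrite card_imset ?card_prod ?expnS ?expn0 ?muln1 //.
move=> [k l] [k' l'] /= E; have /H [/eqP] : (k - k') *: u + (l - l') *: v = 0.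
  by rewrite !scalerBl addrACA E -opprD subrr.
by rewrite subr_eq0 => /eqP -> /eqP; rewrite subr_eq0 => /eqP ->.
Qed.
Lemma span2_lin u v x y k l : x \in span2 u v -> y \in span2 u v -> k *: x + l *: y \in span2 u v.
Proof.
move=> /span2P [a [b ->]] /span2P [a' [b' ->]]; apply/span2P.
exists (k * a + l * a'), (k * b + l * b').
by rewrite !scalerDr !scalerA !scalerDl addrACA.
Qed.
Lemma span2_eq u v x y : indep2 u v -> indep2 x y -> x \in span2 u v -> y \in span2 u v ->
  span2 x y = span2 u v.
Proof.
move=> Iuv Ixy Hx Hy; apply/eqP; rewrite eqEcard (card_span2 Iuv) (card_span2 Ixy) leqnn andbT.
apply/subsetP => z /span2P [k [l ->]]; exact: span2_lin.
Qed.
Lemma span2_shear u v k : span2 u (v + k *: u) = span2 u v.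
Proof.
apply/setP => z; apply/span2P/span2P => [[a [b ->]]|[a [b ->]]].
  exists (a + b * k), b; by rewrite scalerDr scalerA scalerDl -addrA [b *: v + _]addrC.
exists (a - b * k), b; by rewrite scalerDr scalerA scalerBl [b *: v + _]addrC addrA subrK.
Qed.
Lemma span2C u v : span2 u v = span2 v u.
Proof.
by apply/setP => z; apply/span2P/span2P => [[a [b ->]]|[a [b ->]]]; exists b, a; rewrite addrC.
Qed.
Lemma span2_scale u v k : k != 0 -> span2 u (k *: v) = span2 u v.
Proof.
move=> k0; apply/setP => z; apply/span2P/span2P => [[a [b ->]]|[a [b ->]]].
  by exists a, (b * k); rewrite scalerA.
by exists a, (b / k); rewrite scalerA mulfVK.
Qed.
Lemma mem_span2l u v : u \in span2 u v.
Proof. by apply/span2P; exists 1, 0; rewrite scale1r scale0r addr0. Qed.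
Lemma mem_span2r u v : v \in span2 u v.
Proof. by apply/span2P; exists 0, 1; rewrite scale1r scale0r add0r. Qed.
Lemma span1_sub2 u v : span1 u \subset span2 u v.
Proof. by apply/subsetP => z /span1P [k ->]; apply/span2P; exists k, 0; rewrite scale0r addr0. Qed.
Lemma act_span2 (g : 'M[F]_5) u v : act g (span2 u v) = span2 (g *m u) (g *m v).
Proof.
apply/setP => z; apply/imsetP/span2P => [[x /span2P [k [l ->]] ->]|[k [l ->]]].
  by exists k, l; rewrite mulmxDr !scalemxAr.
by exists (k *: u + l *: v); [apply/span2P; exists k, l | rewrite mulmxDr !scalemxAr].
Qed.
Lemma act_mul (g h : 'M[F]_5) (L : {set vec F}) : act h (act g L) = act (h *m g) L.
Proof. by rewrite /act -imset_comp; apply: eq_imset => x /=; rewrite mulmxA. Qed.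
Lemma lineP u v : indep2 u v -> span2 u v \in lines F.
Proof. by move=> I; rewrite inE; apply/existsP; exists u; apply/existsP; exists v; rewrite I eqxx. Qed.
Lemma linesP L : reflect (exists u v, indep2 u v /\ L = span2 u v) (L \in lines F).
Proof.
rewrite inE; apply: (iffP existsP) => [[u /existsP [v /andP [I /eqP ->]]]|[u [v [I ->]]]].
  by exists u, v.
by exists u; apply/existsP; exists v; rewrite I eqxx.
Qed.
End S.

End MBase.
Import MBase.

Module MC.
Set Implicit Arguments. Unset Strict Implicit. Unset Printing Implicit Defensive.
Import GRing.Theory.
Local Open Scope ring_scope.
Set Implicit Arguments. Unset Strict Implicit. Unset Printing Implicit Defensive.
Section NF.
Variable F : finFieldType.
Local Notation coord := Defs.coord.

Lemma v5_eqI (x0 x1 x2 x3 x4 y0 y1 y2 y3 y4 : F) :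
  x0 = y0 -> x1 = y1 -> x2 = y2 -> x3 = y3 -> x4 = y4 ->
  v5 x0 x1 x2 x3 x4 = v5 y0 y1 y2 y3 y4.
Proof. by move=> -> -> -> -> ->. Qed.

Lemma mem_v5 (x0 x1 x2 x3 x4 u0 u1 u2 u3 u4 v0 v1 v2 v3 v4 : F) :
  v5 x0 x1 x2 x3 x4 \in span2 (v5 u0 u1 u2 u3 u4) (v5 v0 v1 v2 v3 v4) ->
  exists k l, [/\ x0 = k * u0 + l * v0, x1 = k * u1 + l * v1, x2 = k * u2 + l * v2,
     x3 = k * u3 + l * v3 & x4 = k * u4 + l * v4].
Proof. by move/span2P => [k [l]]; rewrite v5_comb => /v5_inj E; exists k, l. Qed.

Lemma v5_scale (k x0 x1 x2 x3 x4 : F) :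
  k *: v5 x0 x1 x2 x3 x4 = v5 (k * x0) (k * x1) (k * x2) (k * x3) (k * x4).
Proof.
rewrite -[k *: _]addr0 -(scale0r (v5 0 0 0 0 0)) v5_comb.
by apply: v5_eqI; rewrite mulr0 addr0.
Qed.

Lemma in_v5 (k l x0 x1 x2 x3 x4 u0 u1 u2 u3 u4 v0 v1 v2 v3 v4 : F) :
  x0 = k * u0 + l * v0 -> x1 = k * u1 + l * v1 -> x2 = k * u2 + l * v2 ->
  x3 = k * u3 + l * v3 -> x4 = k * u4 + l * v4 ->
  v5 x0 x1 x2 x3 x4 \in span2 (v5 u0 u1 u2 u3 u4) (v5 v0 v1 v2 v3 v4).
Proof. by move=> *; apply/span2P; exists k, l; rewrite v5_comb; apply: v5_eqI. Qed.

Lemma indep_v5 (u0 u1 u2 u3 u4 v0 v1 v2 v3 v4 : F) :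
  (forall k l, k * u0 + l * v0 = 0 -> k * u1 + l * v1 = 0 -> k * u2 + l * v2 = 0 ->
     k * u3 + l * v3 = 0 -> k * u4 + l * v4 = 0 -> k = 0 /\ l = 0) ->
  indep2 (v5 u0 u1 u2 u3 u4) (v5 v0 v1 v2 v3 v4).
Proof.
move=> H; apply/indep2P => k l; rewrite v5_comb v5_0 => /v5_inj [*]; exact: H.
Qed.

Lemma in_pi (x0 x1 x2 x3 x4 : F) : (v5 x0 x1 x2 x3 x4 \in pi_pl F) = (x3 == 0) && (x4 == 0).
Proof. by rewrite inE; case: (coord_v5 x0 x1 x2 x3 x4) => _ _ _ -> ->. Qed.
Lemma in_ell (x0 x1 x2 x3 x4 : F) :
  (v5 x0 x1 x2 x3 x4 \in ell F) = [&& x2 == 0, x3 == 0 & x4 == 0].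
Proof. by rewrite inE; case: (coord_v5 x0 x1 x2 x3 x4) => _ _ -> -> ->. Qed.

Definition f4 (d : option F) : F := if d is Some l then l else 1.
Definition f5 (d : option F) : F := if d is Some _ then 1 else 0.
Definition solidd (d : option F) : {set vec F} :=
  [set x : vec F | f5 d * coord x 3 == f4 d * coord x 4].
Lemma in_solidd d (x0 x1 x2 x3 x4 : F) :
  (v5 x0 x1 x2 x3 x4 \in solidd d) = (f5 d * x3 == f4 d * x4).
Proof. by rewrite inE; case: (coord_v5 x0 x1 x2 x3 x4) => _ _ _ -> ->. Qed.

Lemma f45_inj d (k l : F) : k * f4 d = l * f4 d -> k * f5 d = l * f5 d -> k = l.
Proof. by case: d => [m|] /=; rewrite ?mulr1 ?mulr0; [move=> _ | move=> ->]. Qed.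
Lemma f45_0 d (k : F) : k * f4 d = 0 -> k * f5 d = 0 -> k = 0.
Proof. by case: d => [m|] /=; rewrite ?mulr1 ?mulr0; [move=> _ | move=> ->]. Qed.

Definition pv (o : option F) : vec F := if o is Some k then v5 1 k 0 0 0 else v5 0 1 0 0 0.
Definition w3 (o : option F) (be y t4 t5 : F) : vec F :=
  if o is Some _ then v5 0 be y t4 t5 else v5 be 0 y t4 t5.
Definition nfA o (u : F) := span2 (pv o) (w3 o u 1 0 0).
Definition nfB d o be y := span2 (pv o) (w3 o be y (f4 d) (f5 d)).
Definition nfC d (y1 y2 z1 z2 : F) := span2 (v5 y1 y2 1 0 0) (v5 z1 z2 0 (f4 d) (f5 d)).
Definition nfD (u1 u2 u3 v1 v2 v3 : F) := span2 (v5 u1 u2 u3 1 0) (v5 v1 v2 v3 0 1).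

Lemma indepA o u : indep2 (pv o) (w3 o u 1 0 0).
Proof.
case: o => [m|]; apply: indep_v5 => k l; rewrite !(mulr0, mulr1, addr0, add0r) => //;
  by [move=> -> _ -> | move=> _ -> ->].
Qed.
Lemma indepB d o (be y : F) : indep2 (pv o) (w3 o be y (f4 d) (f5 d)).
Proof.
have H : forall k l, k * 0 + l * f4 d = 0 -> k * 0 + l * f5 d = 0 -> l = 0.
  by move=> k l; rewrite !mulr0 !add0r; apply: f45_0.
case: o => [m|]; apply: indep_v5 => k l E0 E1 E2 E3 E4; have l0 := H _ _ E3 E4;
  move: E0 E1; rewrite l0 !(mulr0, mulr1, addr0, add0r) => //;
  by [move=> -> _ | move=> _ ->].
Qed.
Lemma indepC d (y1 y2 z1 z2 : F) : indep2 (v5 y1 y2 1 0 0) (v5 z1 z2 0 (f4 d) (f5 d)).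
Proof.
apply: indep_v5 => k l _ _; rewrite !(mulr0, mulr1, addr0, add0r) => k0.
by rewrite k0 => /f45_0 H /H.
Qed.
Lemma indepD (u1 u2 u3 v1 v2 v3 : F) : indep2 (v5 u1 u2 u3 1 0) (v5 v1 v2 v3 0 1).
Proof. by apply: indep_v5 => k l _ _ _; rewrite !(mulr0, mulr1, addr0, add0r). Qed.

Lemma span2_subset (S : {set vec F}) (u v : vec F) :
  (forall k l, k *: u + l *: v \in S) -> span2 u v \subset S.
Proof. by move=> H; apply/subsetP => z /span2P [k [l ->]]. Qed.

Lemma neq_set (L S : {set vec F}) (x : vec F) : x \in L -> x \notin S -> L != S.
Proof. by move=> xL xS; apply/eqP => E; move: xS; rewrite -E xL. Qed.

Lemma pv_ell o : pv o \in ell F.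
Proof. by case: o => [m|]; rewrite in_ell !eqxx. Qed.
Lemma pv_pi o : pv o \in pi_pl F.
Proof. by case: o => [m|]; rewrite in_pi !eqxx. Qed.
Lemma pv_neq0 o : pv o != 0.
Proof.
case: o => [m|]; apply/eqP; rewrite v5_0 => /v5_inj [];
  [move=> /eqP | move=> _ /eqP]; by rewrite oner_eq0.
Qed.


Definition typeBd d (P : {set vec F}) : {set {set vec F}} :=
  [set L in lines F | [&& L \subset solidd d, P \subset L & ~~ (L \subset pi_pl F)]].
Definition typeCd d : {set {set vec F}} :=
  [set L in lines F | [&& L \subset solidd d, L :&: ell F == zero_sp F
                        & L :&: pi_pl F \in points F]].

Ltac simp := rewrite ?(mulr0, mulr1, addr0, add0r, mul0r, mul1r, eqxx, oner_eq0, andbT, andbF).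

Lemma nfA_type o u : nfA o u \in typeA (span1 (pv o)).
Proof.
rewrite inE lineP ?indepA //= span1_sub2 /=; apply/andP; split.
  by apply: span2_subset => k l; case: o => [m|]; rewrite /= v5_comb in_pi; simp.
by apply: (neq_set (mem_span2r _ _)); case: o => [m|]; rewrite /= in_ell; simp.
Qed.

Lemma sub_solid d o be y : nfB d o be y \subset solidd d.
Proof.
by apply: span2_subset => k l; case: o => [m|]; rewrite /= v5_comb in_solidd; apply/eqP; ring.
Qed.

Lemma nfB_type d o be y : nfB d o be y \in typeBd d (span1 (pv o)).
Proof.
rewrite inE lineP ?indepB //= sub_solid span1_sub2 /=.
apply/negP => /subsetP /(_ _ (mem_span2r _ _)).
by case: o => [m|]; rewrite /= in_pi; case: d => [n|] /=; simp.
Qed.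

Lemma nfC_sub_solid d y1 y2 z1 z2 : nfC d y1 y2 z1 z2 \subset solidd d.
Proof. by apply: span2_subset => k l; rewrite /= v5_comb in_solidd; apply/eqP; ring. Qed.

Lemma nfC_type d y1 y2 z1 z2 : nfC d y1 y2 z1 z2 \in typeCd d.
Proof.
rewrite inE lineP ?indepC //= nfC_sub_solid /=; apply/andP; split.
  apply/eqP/setP => z; rewrite in_setI in_set1; apply/andP/eqP => [[/span2P [k [l ->]]]|->].
    rewrite v5_comb in_ell; simp => /and3P [/eqP k0 /eqP l4 /eqP l5].
    by rewrite k0 (f45_0 l4 l5); simp; rewrite -v5_0.
  split; last by rewrite v5_0 in_ell eqxx.
  by apply/span2P; exists 0, 0; rewrite !scale0r addr0.
rewrite inE; apply/existsP; exists (v5 y1 y2 1 0 0); apply/andP; split.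
  by apply/eqP; rewrite v5_0 => /v5_inj [_ _ /eqP]; rewrite oner_eq0.
apply/eqP/setP => z; rewrite in_setI; apply/andP/span1P => [[/span2P [k [l ->]]]|[k ->]].
  rewrite v5_comb in_pi; simp => /andP [/eqP l4 /eqP l5].
  by exists k; rewrite (f45_0 l4 l5) v5_scale; apply: v5_eqI; ring.
split; first by apply/span2P; exists k, 0; rewrite scale0r addr0.
by rewrite -[k *: _]addr0 -(scale0r (v5 0 0 0 1 0)) v5_comb in_pi; simp.
Qed.

Lemma nfD_type u1 u2 u3 v1 v2 v3 : nfD u1 u2 u3 v1 v2 v3 \in typeD F.
Proof.
rewrite inE lineP ?indepD //=.
apply/eqP/setP => z; rewrite in_setI in_set1; apply/andP/eqP => [[/span2P [k [l ->]]]|->].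
  by rewrite v5_comb in_pi; simp => /andP [/eqP -> /eqP ->]; simp; rewrite -v5_0.
split; last by rewrite v5_0 in_pi eqxx.
by apply/span2P; exists 0, 0; rewrite !scale0r addr0.
Qed.
End NF.

End MC.
Import MC.

Module MD.
Set Implicit Arguments. Unset Strict Implicit. Unset Printing Implicit Defensive.
Import GRing.Theory.
Local Open Scope ring_scope.
Set Implicit Arguments. Unset Strict Implicit. Unset Printing Implicit Defensive.
Section Act.
Variable F : finFieldType.
Variables a b c : F.
Local Notation M := (Mrst a b c).

Lemma v5_add (x0 x1 x2 x3 x4 y0 y1 y2 y3 y4 : F) :
  v5 x0 x1 x2 x3 x4 + v5 y0 y1 y2 y3 y4 = v5 (x0 + y0) (x1 + y1) (x2 + y2) (x3 + y3) (x4 + y4).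
Proof. by rewrite -[v5 x0 _ _ _ _]scale1r -[v5 y0 _ _ _ _]scale1r v5_comb !mul1r. Qed.

Lemma span2_shear_eq (X Y X' Y' : vec F) k : X = X' -> Y = Y' + k *: X' -> span2 X Y = span2 X' Y'.
Proof. by move=> -> ->; rewrite span2_shear. Qed.

Ltac vsolve := rewrite ?v5_scale ?v5_add; apply: v5_eqI; ring.

Definition dA (o : option F) (r s : F) := if o is Some m then s - m * r else r.
Lemma actA r s t o u : act (M r s t) (nfA o u) = nfA o (u + dA o r s).
Proof.
case: o => [m|]; rewrite /nfA act_span2 /= !Mrst_v5.
  by apply: (@span2_shear_eq _ _ _ _ r); vsolve.
by apply: (@span2_shear_eq _ _ _ _ s); vsolve.
Qed.

Definition Aof d (r s t y : F) := r * y + (r ^+ 2 - a * r + s) * f4 d + t * f5 d.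
Definition Bof d (r s t y : F) := s * y + (2 * r * s - t) * f4 d + (s ^+ 2 + b * s - c * r) * f5 d.
Definition dB d (o : option F) r s t y :=
  if o is Some m then Bof d r s t y - m * Aof d r s t y else Aof d r s t y.
Lemma actB r s t d o be y :
  act (M r s t) (nfB d o be y) =
  nfB d o (be + dB d o r s t y) (y + 2 * r * f4 d + 2 * s * f5 d).
Proof.
rewrite /nfB /dB /Aof /Bof; case: o => [m|]; rewrite act_span2 /= !Mrst_v5.
  by apply: (@span2_shear_eq _ _ _ _ (r * y + (r ^+ 2 - a * r + s) * f4 d + t * f5 d)); vsolve.
by apply: (@span2_shear_eq _ _ _ _ (s * y + (2 * r * s - t) * f4 d + (s ^+ 2 + b * s - c * r) * f5 d)); vsolve.
Qed.

Definition c3 d (r s : F) := 2 * r * f4 d + 2 * s * f5 d.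
Lemma actC r s t d y1 y2 z1 z2 :
  act (M r s t) (nfC d y1 y2 z1 z2) =
  nfC d (y1 + r) (y2 + s) (z1 + Aof d r s t 0 - c3 d r s * (y1 + r))
        (z2 + Bof d r s t 0 - c3 d r s * (y2 + s)).
Proof.
rewrite /nfC /Aof /Bof /c3 act_span2 !Mrst_v5.
by apply: (@span2_shear_eq _ _ _ _ (2 * r * f4 d + 2 * s * f5 d)); vsolve.
Qed.

Lemma actD r s t u1 u2 u3 v1 v2 v3 :
  act (M r s t) (nfD u1 u2 u3 v1 v2 v3) =
  nfD (u1 + r * u3 + (r ^+ 2 - a * r + s)) (u2 + s * u3 + (2 * r * s - t)) (u3 + 2 * r)
      (v1 + r * v3 + t) (v2 + s * v3 + (s ^+ 2 + b * s - c * r)) (v3 + 2 * s).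
Proof.
rewrite /nfD act_span2 !Mrst_v5.
by apply: (@span2_shear_eq _ _ _ _ 0); vsolve.
Qed.

Definition invC d (y1 y2 z1 z2 : F) :=
  f5 d * z2 + f4 d * z1 + (f5 d * y2 + f4 d * y1) ^+ 2 - (b * f5 d + f4 d ^+ 2) * y2
  + (c * f5 d + a * f4 d ^+ 2) * y1.
Lemma invC_act r s t d y1 y2 z1 z2 :
  invC d (y1 + r) (y2 + s) (z1 + Aof d r s t 0 - c3 d r s * (y1 + r))
        (z2 + Bof d r s t 0 - c3 d r s * (y2 + s)) = invC d y1 y2 z1 z2.
Proof. by rewrite /invC /Aof /Bof /c3; case: d => [m|] /=; ring. Qed.

Definition J1 (u1 u2 u3 v1 v2 v3 : F) := 2 * (u2 + v1) - u3 * v3.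
Definition J2 (u1 u2 u3 v1 v2 v3 : F) := 4 * u1 - u3 ^+ 2 + 2 * a * u3 - 2 * v3.
Definition J3 (u1 u2 u3 v1 v2 v3 : F) := 4 * v2 - v3 ^+ 2 - 2 * b * v3 + 2 * c * u3.
Lemma J_act r s t u1 u2 u3 v1 v2 v3 :
  let p' := (u1 + r * u3 + (r ^+ 2 - a * r + s), u2 + s * u3 + (2 * r * s - t), u3 + 2 * r,
      v1 + r * v3 + t, v2 + s * v3 + (s ^+ 2 + b * s - c * r), v3 + 2 * s) in
  [/\ J1 p'.1.1.1.1.1 p'.1.1.1.1.2 p'.1.1.1.2 p'.1.1.2 p'.1.2 p'.2 = J1 u1 u2 u3 v1 v2 v3,
      J2 p'.1.1.1.1.1 p'.1.1.1.1.2 p'.1.1.1.2 p'.1.1.2 p'.1.2 p'.2 = J2 u1 u2 u3 v1 v2 v3 &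
      J3 p'.1.1.1.1.1 p'.1.1.1.1.2 p'.1.1.1.2 p'.1.1.2 p'.1.2 p'.2 = J3 u1 u2 u3 v1 v2 v3].
Proof. by rewrite /J1 /J2 /J3 /=; split; ring. Qed.
End Act.

End MD.
Import MD.

Module ME.
Set Implicit Arguments. Unset Strict Implicit. Unset Printing Implicit Defensive.
Import GRing.Theory.
Local Open Scope ring_scope.
Set Implicit Arguments. Unset Strict Implicit. Unset Printing Implicit Defensive.
Ltac fld := field; repeat (match goal with |- is_true (_ && _) => apply/andP; split end); try done.
Section Cl.
Variable F : finFieldType.
Local Notation coord := Defs.coord.

Lemma test (x y : F) : x != 0 -> y = x * 2 -> y / x = 2.
Proof. move=> x0 ->. by field. Qed.

Lemma pt_exists (m0 m1 : F) : (m0 != 0) || (m1 != 0) ->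
  exists o τ, τ != 0 /\ v5 m0 m1 0 0 0 = τ *: pv o.
Proof.
case: (eqVneq m0 0) => [->|m0n] /= m1n.
  by exists None, m1; split => //; rewrite v5_scale /=; apply: v5_eqI; ring.
by exists (Some (m1 / m0)), m0; split => //; rewrite v5_scale /=; apply: v5_eqI; by fld.
Qed.

Lemma dir_exists (u3 u4 v3 v4 : F) : (u3 != 0) || (u4 != 0) -> u3 * v4 = u4 * v3 ->
  exists d σ k, [/\ σ != 0, u3 = σ * f4 d, u4 = σ * f5 d, v3 = k * u3 & v4 = k * u4].
Proof.
case: (eqVneq u4 0) => [->|u4n] /=.
  rewrite orbF mul0r => u3n /eqP; rewrite mulf_eq0 (negPf u3n) /= => /eqP ->.
  by exists None, u3, (v3 / u3); split => //=; field; rewrite // mulr0.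
move=> _ E; exists (Some (u3 / u4)), u4, (v4 / u4); split => //=; try by field.
apply: (mulfI u4n); rewrite -E; by fld.
Qed.

Lemma w3_decomp o (x0 x1 x2 x3 x4 : F) :
  exists be k, v5 x0 x1 x2 x3 x4 = w3 o be x2 x3 x4 + k *: pv o.
Proof.
case: o => [m|] /=.
  by exists (x1 - m * x0), x0; rewrite v5_scale v5_add; apply: v5_eqI; ring.
by exists x0, x1; rewrite v5_scale v5_add; apply: v5_eqI; ring.
Qed.

Lemma comb_neq0 (U V : vec F) k l : indep2 U V -> (k != 0) || (l != 0) -> k *: U + l *: V != 0.
Proof.
move=> /indep2P H kl; apply/eqP => /H [k0 l0]; by move: kl; rewrite k0 l0 eqxx.
Qed.

Lemma ell_span : ell F = span2 (v5 1 0 0 0 0) (v5 0 1 0 0 0).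
Proof.
apply/setP => z; rewrite [z]v5E in_ell; apply/idP/idP.
  move=> /and3P [/eqP -> /eqP -> /eqP ->]. apply: (@in_v5 _ (coord z 0) (coord z 1)); ring.
by move/mem_v5 => [k [l [_ _ -> -> ->]]]; rewrite !mulr0 addr0 eqxx.
Qed.

Lemma pv_mem (U V p : vec F) τ k l : τ != 0 -> τ *: p = k *: U + l *: V -> p \in span2 U V.
Proof.
move=> τn E; apply/span2P; exists (τ^-1 * k), (τ^-1 * l).
by rewrite -!scalerA -scalerDr -E scalerA mulVf // scale1r.
Qed.

Lemma span2_subm (U V x y : vec F) k : x \in span2 U V -> y \in span2 U V -> x - k *: y \in span2 U V.
Proof. by move=> hx hy; rewrite -scaleNr -[x]scale1r; apply: span2_lin. Qed.

Lemma classify_main (u0 u1 u2 u3 u4 v0 v1 v2 v3 v4 : F) :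
  indep2 (v5 u0 u1 u2 u3 u4) (v5 v0 v1 v2 v3 v4) ->
  (u3 != 0) || (u4 != 0) -> u3 * v4 = u4 * v3 ->
  (exists d o be y, span2 (v5 u0 u1 u2 u3 u4) (v5 v0 v1 v2 v3 v4) = nfB d o be y) \/
  (exists d y1 y2 z1 z2, span2 (v5 u0 u1 u2 u3 u4) (v5 v0 v1 v2 v3 v4) = nfC d y1 y2 z1 z2).
Proof.
move=> I u34 D0; have [d [σ [k [σn e3 e4 e3' e4']]]] := dir_exists u34 D0.
subst v3 v4; subst u3 u4.
have := comb_neq0 (k := - k) (l := 1) I; rewrite oner_neq0 orbT => /(_ isT) w1n.
case: (eqVneq (v2 - k * u2) 0) => [m2z|m2n].
  move/eqP: m2z; rewrite subr_eq0 => /eqP ev2; subst v2.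
  have m01 : (v0 - k * u0 != 0) || (v1 - k * u1 != 0).
    move: w1n; apply: contraNT => /norP [/negPn/eqP m0 /negPn/eqP m1]; apply/eqP.
    rewrite v5_comb v5_0; apply: v5_eqI; try ring.
      by rewrite -m0; ring.
    by rewrite -m1; ring.
  have [o [τ [τn Eτ]]] := pt_exists m01.
  have [be [κ Ex]] := w3_decomp o (u0 / σ) (u1 / σ) (u2 / σ) (f4 d) (f5 d).
  have pm : pv o \in span2 (v5 u0 u1 u2 (σ * f4 d) (σ * f5 d))
                          (v5 v0 v1 (k * u2) (k * (σ * f4 d)) (k * (σ * f5 d))).
    apply: (@pv_mem _ _ _ τ (- k) 1) => //; rewrite -Eτ v5_comb; apply: v5_eqI; ring.
  left; exists d, o, be, (u2 / σ); rewrite /nfB; symmetry; apply: span2_eq => //.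
    exact: indepB.
  rewrite -(addrK (κ *: pv o) (w3 o be (u2 / σ) (f4 d) (f5 d))) -Ex.
  apply: span2_subm pm; apply: (@in_v5 _ (1 / σ) 0); by fld.
right; exists d, ((v0 - k * u0) / (v2 - k * u2)), ((v1 - k * u1) / (v2 - k * u2)),
  (u0 / σ - (u2 / σ) * ((v0 - k * u0) / (v2 - k * u2))),
  (u1 / σ - (u2 / σ) * ((v1 - k * u1) / (v2 - k * u2))).
rewrite /nfC; symmetry; apply: span2_eq => //; first exact: indepC.
  apply: (@in_v5 _ (- k / (v2 - k * u2)) (1 / (v2 - k * u2))); by fld.
apply: (@in_v5 _ (1 / σ + u2 * k / (σ * (v2 - k * u2))) (- (u2 / (σ * (v2 - k * u2))))); by fld.
Qed.

Lemma classify_pi (u0 u1 u2 v0 v1 v2 : F) :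
  indep2 (v5 u0 u1 u2 0 0) (v5 v0 v1 v2 0 0) ->
  span2 (v5 u0 u1 u2 0 0) (v5 v0 v1 v2 0 0) != ell F ->
  exists o u, span2 (v5 u0 u1 u2 0 0) (v5 v0 v1 v2 0 0) = nfA o u.
Proof.
move=> I nE.
have u2v2 : (u2 != 0) || (v2 != 0).
  move: nE; apply: contraNT => /norP [/negPn/eqP e2 /negPn/eqP e2']; subst u2 v2.
  apply/eqP; rewrite ell_span; apply: span2_eq => //.
  - by apply: indep_v5 => k l; rewrite !(mulr0, mulr1, addr0, add0r) => -> ->.
  - by apply: (@in_v5 _ u0 u1); ring.
  - by apply: (@in_v5 _ v0 v1); ring.
have := comb_neq0 (k := v2) (l := - u2) I; rewrite oppr_eq0 orbC u2v2 => /(_ isT) w1n.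
have m01 : (v2 * u0 - u2 * v0 != 0) || (v2 * u1 - u2 * v1 != 0).
  move: w1n; apply: contraNT => /norP [/negPn/eqP m0 /negPn/eqP m1]; apply/eqP.
  rewrite v5_comb v5_0; apply: v5_eqI; try ring.
    by rewrite -m0; ring.
  by rewrite -m1; ring.
have [o [τ [τn Eτ]]] := pt_exists m01.
have [α [β Eαβ]] : exists α β, α * u2 + β * v2 = 1.
  case: (eqVneq u2 0) => [u20|u2n].
    by move: u2v2; rewrite u20 eqxx /= => v2n; exists 0, (1 / v2); field.
  by exists (1 / u2), 0; field.
have [be [κ Ex]] := w3_decomp o (α * u0 + β * v0) (α * u1 + β * v1) 1 0 0.
have pm : pv o \in span2 (v5 u0 u1 u2 0 0) (v5 v0 v1 v2 0 0).
  apply: (@pv_mem _ _ _ τ v2 (- u2)) => //; rewrite -Eτ v5_comb; apply: v5_eqI; ring.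
exists o, be; rewrite /nfA; symmetry; apply: span2_eq => //; first exact: indepA.
rewrite -(addrK (κ *: pv o) (w3 o be 1 0 0)) -Ex.
apply: span2_subm pm; apply: (@in_v5 _ α β); rewrite ?Eαβ //; ring.
Qed.

Lemma classify_v5 (u0 u1 u2 u3 u4 v0 v1 v2 v3 v4 : F) :
  indep2 (v5 u0 u1 u2 u3 u4) (v5 v0 v1 v2 v3 v4) ->
  span2 (v5 u0 u1 u2 u3 u4) (v5 v0 v1 v2 v3 v4) != ell F ->
  let L := span2 (v5 u0 u1 u2 u3 u4) (v5 v0 v1 v2 v3 v4) in
  [\/ exists o u, L = nfA o u,
      exists d o be y, L = nfB d o be y,
      exists d y1 y2 z1 z2, L = nfC d y1 y2 z1 z2 |
      exists u1 u2 u3 v1 v2 v3, L = nfD u1 u2 u3 v1 v2 v3].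
Proof.
move=> I nE L.
case: (eqVneq (u3 * v4 - u4 * v3) 0) => [D0|Dn]; last first.
  apply: Or44.
  exists ((v4 * u0 - u4 * v0) / (u3 * v4 - u4 * v3)), ((v4 * u1 - u4 * v1) / (u3 * v4 - u4 * v3)),
    ((v4 * u2 - u4 * v2) / (u3 * v4 - u4 * v3)),
    ((u3 * v0 - v3 * u0) / (u3 * v4 - u4 * v3)), ((u3 * v1 - v3 * u1) / (u3 * v4 - u4 * v3)),
    ((u3 * v2 - v3 * u2) / (u3 * v4 - u4 * v3)).
  rewrite /L /nfD; symmetry; apply: span2_eq => //; first exact: indepD.
    by apply: (@in_v5 _ (v4 / (u3 * v4 - u4 * v3)) (- u4 / (u3 * v4 - u4 * v3))); fld.
  by apply: (@in_v5 _ (- v3 / (u3 * v4 - u4 * v3)) (u3 / (u3 * v4 - u4 * v3))); fld.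
move/eqP: D0; rewrite subr_eq0 => /eqP D0.
case: (boolP ((u3 != 0) || (u4 != 0))) => [u34|].
  by case: (classify_main I u34 D0) => [H|H]; [apply: Or42 | apply: Or43].
case: (boolP ((v3 != 0) || (v4 != 0))) => [v34 _|].
  have I' : indep2 (v5 v0 v1 v2 v3 v4) (v5 u0 u1 u2 u3 u4).
    by apply/indep2P => k l; rewrite addrC => /(indep2P _ _ I) [-> ->].
  have D0' : v3 * u4 = v4 * u3 by rewrite [v3 * u4]mulrC -D0 mulrC.
  rewrite /L span2C.
  by case: (classify_main I' v34 D0') => [H|H]; [apply: Or42 | apply: Or43].
move=> /norP [/negPn/eqP e3 /negPn/eqP e4] /norP [/negPn/eqP e3' /negPn/eqP e4'].
subst u3 u4 v3 v4; apply: Or41; exact: classify_pi.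
Qed.

Lemma classify L : L \in lines F -> L != ell F ->
  [\/ exists o u, L = nfA o u,
      exists d o be y, L = nfB d o be y,
      exists d y1 y2 z1 z2, L = nfC d y1 y2 z1 z2 |
      exists u1 u2 u3 v1 v2 v3, L = nfD u1 u2 u3 v1 v2 v3].
Proof.
move=> /linesP [u [v [I ->]]]; rewrite [u]v5E [v]v5E in I *; exact: classify_v5.
Qed.
End Cl.

End ME.
Import ME.

Module MF.
Set Implicit Arguments. Unset Strict Implicit. Unset Printing Implicit Defensive.
Import GRing.Theory.
Local Open Scope ring_scope.
Set Implicit Arguments. Unset Strict Implicit. Unset Printing Implicit Defensive.
Section Orb.
Variable F : finFieldType.
Variables a b c : F.
Local Notation M := (Mrst a b c).
Local Notation coord := Defs.coord.
Local Notation orbit := Defs.orbit.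

Lemma GsetP (g : 'M[F]_5) : reflect (exists r s t, g = M r s t) (g \in Gset a b c).
Proof.
rewrite inE; apply: (iffP existsP) => [[r /existsP [s /existsP [t /eqP ->]]]|[r [s [t ->]]]].
  by exists r, s, t.
by exists r; apply/existsP; exists s; apply/existsP; exists t.
Qed.

Lemma orbitP (L L' : {set vec F}) :
  reflect (exists r s t, L' = act (M r s t) L) (L' \in orbit a b c L).
Proof.
apply: (iffP imsetP) => [[g /GsetP [r [s [t ->]]] ->]|[r [s [t ->]]]]; first by exists r, s, t.
by exists (M r s t) => //; apply/GsetP; exists r, s, t.
Qed.

Lemma M0 : M 0 0 0 = 1%:M.
Proof.
apply/matrixP => i j; rewrite !mxE.
by case: i => [[|[|[|[|[|i]]]]] Hi] //=; case: j => [[|[|[|[|[|j]]]]] Hj] //=; ring.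
Qed.

Lemma act0 (L : {set vec F}) : act (M 0 0 0) L = L.
Proof.
rewrite M0 /act; under eq_imset do rewrite mul1mx; exact: imset_id.
Qed.

Lemma mem_orbit (L : {set vec F}) : L \in orbit a b c L.
Proof. by apply/orbitP; exists 0, 0, 0; rewrite act0. Qed.

Lemma orbit_act r s t (L : {set vec F}) : orbit a b c (act (M r s t) L) = orbit a b c L.
Proof.
apply/setP => X; apply/orbitP/orbitP => [[r' [s' [t' ->]]]|[r' [s' [t' ->]]]].
  by exists (r' + r), (s' + s), (t' + t + 2 * r' * s); rewrite act_mul Mrst_mul.
exists (r' - r), (s' - s), (t' - t - 2 * (r' - r) * s); rewrite act_mul Mrst_mul.
by congr act; congr Mrst; ring.
Qed.

Lemma M_inj r s t r' s' t' : M r s t = M r' s' t' -> [/\ r = r', s = s' & t = t'].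
Proof.
move=> E; have := congr1 (mulmx^~ (v5 0 0 1 0 0)) E; have := congr1 (mulmx^~ (v5 0 0 0 0 1)) E.
rewrite /= !Mrst_v5 => /v5_inj [e1 _ _ _ _] /v5_inj [e2 e3 _ _ _].
by split; move: e1 e2 e3; rewrite !(mulr0, mulr1, addr0, add0r).
Qed.

Lemma card_Gset : #|Gset a b c| = (#|F| ^ 3)%N.
Proof.
have -> : Gset a b c = [set M p.1.1 p.1.2 p.2 | p : F * F * F].
  apply/setP => g; apply/GsetP/imsetP => [[r [s [t ->]]]|[[[r s] t] _ ->]].
    by exists (r, s, t).
  by exists r, s, t.
rewrite card_imset ?card_prod ?expnS ?expn0 ?muln1 ?mulnA //.
by move=> [[r s] t] [[r' s'] t'] /= /M_inj [-> -> ->].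
Qed.

Lemma card_orbit (L : {set vec F}) :
  (forall r s t r' s' t', act (M r s t) L = act (M r' s' t') L -> [/\ r = r', s = s' & t = t']) ->
  #|orbit a b c L| = (#|F| ^ 3)%N.
Proof.
move=> H; rewrite /orbit card_in_imset ?card_Gset //.
move=> g g' /GsetP [r [s [t ->]]] /GsetP [r' [s' [t' ->]]] /H [-> -> ->] //.
Qed.

Lemma O_mem (L : {set vec F}) : L \in lines F -> L != ell F -> orbit a b c L \in line_orbits a b c.
Proof. by move=> Ll Ln; apply/imsetP; exists L => //; rewrite in_setD1 Ln Ll. Qed.

Lemma OP X : X \in line_orbits a b c ->
  exists L, [/\ L \in lines F, L != ell F & X = orbit a b c L].
Proof. by move=> /imsetP [L]; rewrite in_setD1 => /andP [Ln Ll] ->; exists L. Qed.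
End Orb.

End MF.
Import MF.

Module MG.
Set Implicit Arguments. Unset Strict Implicit. Unset Printing Implicit Defensive.
Import GRing.Theory.
Local Open Scope ring_scope.
Set Implicit Arguments. Unset Strict Implicit. Unset Printing Implicit Defensive.
Ltac simp := rewrite ?(mulr0, mulr1, addr0, add0r, mul0r, mul1r, eqxx, oner_eq0, andbT, andbF).
Section Char.
Variable F : finFieldType.
Local Notation coord := Defs.coord.

Definition p0 (o : option F) : F := if o is Some _ then 1 else 0.
Definition p1 (o : option F) : F := if o is Some m then m else 1.
Definition q0 (o : option F) (be : F) : F := if o is Some _ then 0 else be.
Definition q1 (o : option F) (be : F) : F := if o is Some _ then be else 0.
Lemma pvE o : pv o = v5 (p0 o) (p1 o) 0 0 0.
Proof. by case: o. Qed.
Lemma w3E o (be y t4 t5 : F) : w3 o be y t4 t5 = v5 (q0 o be) (q1 o be) y t4 t5.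
Proof. by case: o. Qed.

Lemma pv_scale_inj o o' (k : F) : pv o = k *: pv o' -> o = o'.
Proof.
case: o => [m|]; case: o' => [m'|]; rewrite /= v5_scale => /v5_inj [e0 e1 _ _ _] //;
  move: e0 e1; simp.
- by move=> <-; simp => ->.
- by move=> /eqP; rewrite oner_eq0.
- by move=> <-; simp => /eqP; rewrite oner_eq0.
Qed.

Lemma pv_in_span o o' (be y t4 t5 : F) :
  (forall l : F, l * y = 0 -> l * t4 = 0 -> l * t5 = 0 -> l = 0) ->
  pv o \in span2 (pv o') (w3 o' be y t4 t5) -> o = o'.
Proof.
move=> H; rewrite pvE w3E pvE => /mem_v5 [k [l [e0 e1 e2 e3 e4]]].
have l0 : l = 0 by apply: H; [move: e2|move: e3|move: e4]; simp => /esym.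
apply: (pv_scale_inj (k := k)); rewrite !pvE v5_scale; apply: v5_eqI; simp => //.
  by rewrite e0 l0; simp.
by rewrite e1 l0; simp.
Qed.

Lemma nfA_inj o (u u' : F) : nfA o u = nfA o u' -> u = u'.
Proof.
move=> E; have : w3 o u' 1 0 0 \in nfA o u by rewrite E; exact: mem_span2r.
clear E; rewrite /nfA pvE !w3E => /mem_v5 [k [l [e0 e1 e2 _ _]]].
by case: o e0 e1 => [m|] /=; move: e2; simp => e2 e0 e1; subst; ring.
Qed.

Lemma nfB_inj d o (be y be' y' : F) : nfB d o be y = nfB d o be' y' -> be = be' /\ y = y'.
Proof.
move=> E; have : w3 o be' y' (f4 d) (f5 d) \in nfB d o be y by rewrite E; exact: mem_span2r.
clear E; rewrite /nfB pvE !w3E => /mem_v5 [k [l [e0 e1 e2 e3 e4]]].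
have l1 : l = 1.
  by apply: (@f45_inj _ d); [move: e3|move: e4]; simp => <-; simp.
subst l; move: e2; simp => e2; subst y'; split => //.
by case: o e0 e1 => [m|] /=; simp => e0 e1; subst; ring.
Qed.

Lemma nfC_inj d (y1 y2 z1 z2 y1' y2' z1' z2' : F) :
  nfC d y1 y2 z1 z2 = nfC d y1' y2' z1' z2' -> [/\ y1 = y1', y2 = y2', z1 = z1' & z2 = z2'].
Proof.
move=> E.
have : v5 y1' y2' 1 0 0 \in nfC d y1 y2 z1 z2 by rewrite E; exact: mem_span2l.
have : v5 z1' z2' 0 (f4 d) (f5 d) \in nfC d y1 y2 z1 z2 by rewrite E; exact: mem_span2r.
move=> /mem_v5 [k [l [e0 e1 e2 e3 e4]]] /mem_v5 [k' [l' [e0' e1' e2' e3' e4']]].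
have l1 : l = 1 by apply: (@f45_inj _ d); [move: e3|move: e4]; simp => <-; simp.
have l0 : l' = 0 by apply: (@f45_0 _ d); [move: e3'|move: e4']; simp => <-.
subst l l'; move: e2 e2' e0 e1 e0' e1'; simp => e2 e2' e0 e1 e0' e1'; subst; split; ring.
Qed.

Lemma nfD_inj (u1 u2 u3 v1 v2 v3 u1' u2' u3' v1' v2' v3' : F) :
  nfD u1 u2 u3 v1 v2 v3 = nfD u1' u2' u3' v1' v2' v3' ->
  [/\ u1 = u1', u2 = u2' & u3 = u3'] /\ [/\ v1 = v1', v2 = v2' & v3 = v3'].
Proof.
move=> E.
have : v5 u1' u2' u3' 1 0 \in nfD u1 u2 u3 v1 v2 v3 by rewrite E; exact: mem_span2l.
have : v5 v1' v2' v3' 0 1 \in nfD u1 u2 u3 v1 v2 v3 by rewrite E; exact: mem_span2r.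
move=> /mem_v5 [k [l [e0 e1 e2 e3 e4]]] /mem_v5 [k' [l' [e0' e1' e2' e3' e4']]].
by move: e3 e4 e3' e4'; simp => e3 e4 e3' e4'; subst; split; split; ring.
Qed.

Lemma dd_eq (d d' : option F) : f5 d * f4 d' = f4 d * f5 d' -> d = d'.
Proof.
case: d => [m|]; case: d' => [m'|] /=; simp => // E.
all: try by rewrite E.
all: try by move/eqP: E; rewrite oner_eq0.
all: by move/eqP: E; rewrite eq_sym oner_eq0.
Qed.
End Char.

End MG.
Import MG.

Module MH.
Set Implicit Arguments. Unset Strict Implicit. Unset Printing Implicit Defensive.
Import GRing.Theory.
Local Open Scope ring_scope.
Set Implicit Arguments. Unset Strict Implicit. Unset Printing Implicit Defensive.
Ltac simp := rewrite ?(mulr0, mulr1, addr0, add0r, mul0r, mul1r, eqxx, oner_eq0, andbT, andbF).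
Section Ex.
Variable F : finFieldType.
Local Notation coord := Defs.coord.

Lemma mem_span1 (x : vec F) : x \in span1 x.
Proof. by apply/span1P; exists 1; rewrite scale1r. Qed.

Lemma w3_npi d o (be y : F) : w3 o be y (f4 d) (f5 d) \notin pi_pl F.
Proof. by rewrite w3E in_pi; case: d => [m|] /=; simp. Qed.
Lemma xC_npi d (z1 z2 : F) : v5 z1 z2 0 (f4 d) (f5 d) \notin pi_pl F.
Proof. by rewrite in_pi; case: d => [m|] /=; simp. Qed.
Lemma xD_npi (u1 u2 u3 : F) : v5 u1 u2 u3 1 0 \notin pi_pl F.
Proof. by rewrite in_pi; simp. Qed.

Lemma nfA_sub_pi o (u : F) : nfA o u \subset pi_pl F.
Proof. by have := nfA_type o u; rewrite inE => /andP [_ /and3P []]. Qed.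

Lemma nfC_ell d (y1 y2 z1 z2 : F) : nfC d y1 y2 z1 z2 :&: ell F = zero_sp F.
Proof. by have := nfC_type d y1 y2 z1 z2; rewrite inE => /andP [_ /and3P [_ /eqP]]. Qed.
Lemma nfD_pi (u1 u2 u3 v1 v2 v3 : F) : nfD u1 u2 u3 v1 v2 v3 :&: pi_pl F = zero_sp F.
Proof. by have := nfD_type u1 u2 u3 v1 v2 v3; rewrite inE => /andP [_ /eqP]. Qed.

Lemma zero_sp_mem (L S : {set vec F}) (x : vec F) : L :&: S = zero_sp F -> x \in L -> x \in S -> x = 0.
Proof. move=> E xL xS; have : x \in L :&: S by rewrite inE xL xS. by rewrite E inE => /eqP. Qed.

Lemma zero_not_point : zero_sp F \notin points F.
Proof.
rewrite inE; apply/existsP => [[x /andP [xn /eqP E]]].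
by move: (mem_span1 x); rewrite -E inE (negPf xn).
Qed.

Lemma pointP (S : {set vec F}) : S \in points F -> exists2 x, x != 0 & x \in S.
Proof. by rewrite inE => /existsP [x /andP [xn /eqP ->]]; exists x => //; exact: mem_span1. Qed.

Lemma pvA o o' (u : F) : pv o \in nfA o' u -> o = o'.
Proof. by apply: pv_in_span => l; rewrite mulr1. Qed.
Lemma pvB d o o' (be y : F) : pv o \in nfB d o' be y -> o = o'.
Proof. by apply: pv_in_span => l _; apply: f45_0. Qed.

Lemma typeA_eq o : typeA (span1 (pv o)) = [set nfA o u | u : F].
Proof.
apply/setP => L; apply/idP/imsetP => [HL|[u _ ->]]; last exact: nfA_type.
move: HL; rewrite inE => /andP [Ll /and3P [Lpi PL Ln]].
have pL := subsetP PL _ (mem_span1 (pv o)).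
case: (classify Ll Ln) => [[o' [u E]]|[d [o' [be [y E]]]]|[d [y1 [y2 [z1 [z2 E]]]]]|
  [u1 [u2 [u3 [v1 [v2 [v3 E]]]]]]]; subst L.
- by exists u => //; rewrite (pvA pL).
- by move: (subsetP Lpi _ (mem_span2r _ _)); rewrite (negPf (w3_npi _ _ _ _)).
- by move: (subsetP Lpi _ (mem_span2r _ _)); rewrite (negPf (xC_npi _ _ _)).
- by move: (subsetP Lpi _ (mem_span2l _ _)); rewrite (negPf (xD_npi _ _ _)).
Qed.

Lemma typeB_eq d o : typeBd d (span1 (pv o)) = [set nfB d o p.1 p.2 | p : F * F].
Proof.
apply/setP => L; apply/idP/imsetP => [HL|[[be y] _ ->]]; last exact: nfB_type.
move: HL; rewrite inE => /andP [Ll /and3P [Ls PL Lpi]].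
have pL := subsetP PL _ (mem_span1 (pv o)).
have Ln : L != ell F.
  by apply: contraNneq Lpi => ->; apply/subsetP => x; rewrite !inE => /and3P [_ -> ->].
case: (classify Ll Ln) => [[o' [u E]]|[d' [o' [be [y E]]]]|[d' [y1 [y2 [z1 [z2 E]]]]]|
  [u1 [u2 [u3 [v1 [v2 [v3 E]]]]]]]; subst L.
- by rewrite nfA_sub_pi in Lpi.
- have := subsetP Ls _ (mem_span2r _ _); rewrite w3E in_solidd => /eqP /dd_eq dd.
  by subst d'; exists (be, y) => //; rewrite (pvB pL).
- by move: (pv_neq0 o); rewrite (zero_sp_mem (nfC_ell _ _ _ _ _) pL (pv_ell o)) eqxx.
- by move: (pv_neq0 o); rewrite (zero_sp_mem (nfD_pi _ _ _ _ _ _) pL (pv_pi o)) eqxx.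
Qed.

Lemma typeC_sub (d : option F) (L : {set vec F}) : L \in typeCd d -> exists y1 y2 z1 z2, L = nfC d y1 y2 z1 z2.
Proof.
rewrite inE => /andP [Ll /and3P [Ls /eqP Lell Lpt]].
have Ln : L != ell F.
  apply: contraTneq Lpt => E; subst L.
  have -> : ell F :&: pi_pl F = ell F.
    by apply/setIidPl/subsetP => x; rewrite !inE => /and3P [_ -> ->].
  by apply/negP => /pointP [x xn xe]; move: xn; rewrite (zero_sp_mem Lell xe xe) eqxx.
case: (classify Ll Ln) => [[o' [u E]]|[d' [o' [be [y E]]]]|[d' [y1 [y2 [z1 [z2 E]]]]]|
  [u1 [u2 [u3 [v1 [v2 [v3 E]]]]]]]; subst L.
- by move: (pv_neq0 o'); rewrite (zero_sp_mem Lell (mem_span2l _ _) (pv_ell o')) eqxx.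
- by move: (pv_neq0 o'); rewrite (zero_sp_mem Lell (mem_span2l _ _) (pv_ell o')) eqxx.
- have := subsetP Ls _ (mem_span2r _ _); rewrite in_solidd => /eqP /dd_eq dd.
  by subst d'; exists y1, y2, z1, z2.
- by move: Lpt; rewrite nfD_pi (negPf zero_not_point).
Qed.

Lemma typeD_sub (L : {set vec F}) : L \in typeD F -> exists u1 u2 u3 v1 v2 v3, L = nfD u1 u2 u3 v1 v2 v3.
Proof.
rewrite inE => /andP [Ll /eqP Lpi].
have Ln : L != ell F.
  apply/eqP => E; subst L; move: (pv_neq0 (@None F)).
  by rewrite (zero_sp_mem Lpi (pv_ell (@None F)) (pv_pi (@None F))) eqxx.
case: (classify Ll Ln) => [[o' [u E]]|[d' [o' [be [y E]]]]|[d' [y1 [y2 [z1 [z2 E]]]]]|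
  [u1 [u2 [u3 [v1 [v2 [v3 E]]]]]]]; subst L.
- by move: (pv_neq0 o'); rewrite (zero_sp_mem Lpi (mem_span2l _ _) (pv_pi o')) eqxx.
- by move: (pv_neq0 o'); rewrite (zero_sp_mem Lpi (mem_span2l _ _) (pv_pi o')) eqxx.
- have : v5 y1 y2 1 0 0 \in pi_pl F by rewrite in_pi eqxx.
  move/(zero_sp_mem Lpi (mem_span2l _ _)); rewrite v5_0 => /v5_inj [_ _ /eqP].
  by rewrite oner_eq0.
- by exists u1, u2, u3, v1, v2, v3.
Qed.
End Ex.

End MH.
Import MH.

Module MI.
Set Implicit Arguments. Unset Strict Implicit. Unset Printing Implicit Defensive.
Import GRing.Theory.
Local Open Scope ring_scope.
Set Implicit Arguments. Unset Strict Implicit. Unset Printing Implicit Defensive.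
Ltac simp := rewrite ?(mulr0, mulr1, addr0, add0r, mul0r, mul1r, subr0, eqxx, oner_eq0, andbT, andbF).
Ltac fld := field; repeat (match goal with |- is_true (_ && _) => apply/andP; split end); try done.
Section Main.
Variable F : finFieldType.
Variables a b c : F.
Hypothesis H2 : (2 : F) != 0.
Hypothesis Hirr : forall x : F, x ^+ 3 + a * x ^+ 2 + b * x + c != 0.
Local Notation M := (Mrst a b c).
Local Notation orbit := (Defs.orbit a b c).
Local Notation O := (line_orbits a b c).

Lemma lin_solve (x y E1 E2 : F) : x - y = E1 - E2 -> E1 = E2 -> x = y.
Proof. by move=> H e; apply/eqP; rewrite -subr_eq0 H e subrr. Qed.

Lemma orbit_mem_eq (L L' : {set vec F}) : L' \in orbit L -> orbit L' = orbit L.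
Proof. by move/orbitP => [r [s [t ->]]]; rewrite orbit_act. Qed.

Lemma orbitA o : orbit (nfA o 0) = [set nfA o u | u : F].
Proof.
apply/setP => L; apply/orbitP/imsetP => [[r [s [t ->]]]|[u _ ->]].
  by rewrite actA; exists (0 + dA o r s).
case: o => [m|].
  by exists 0, u, 0; rewrite actA /=; congr nfA; ring.
by exists u, 0, 0; rewrite actA /=; congr nfA; ring.
Qed.

Lemma orbitB d o : orbit (nfB d o 0 0) = [set nfB d o p.1 p.2 | p : F * F].
Proof.
apply/setP => L; apply/orbitP/imsetP => [[r [s [t ->]]]|[[be y] _ ->]].
  by rewrite actB; exists (0 + dB a b c d o r s t 0, 0 + 2 * r * f4 d + 2 * s * f5 d).
rewrite /=; case: d => [l|]; case: o => [k|].
- case: (eqVneq (l + k) 0) => [lk|lkn].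
  + have Pl := Hirr l.
    exists (((y / 2) ^+ 2 + (b + l ^+ 2) * (y / 2) - be) / (l ^+ 3 + a * l ^+ 2 + b * l + c)).
    exists (y / 2 - l * (((y / 2) ^+ 2 + (b + l ^+ 2) * (y / 2) - be) / (l ^+ 3 + a * l ^+ 2 + b * l + c))).
    exists 0.
    have -> : k = - l by apply/eqP; rewrite -addr_eq0 addrC lk.
    rewrite actB /dB /Aof /Bof /=; congr nfB; fld.
  + exists 0, (y / 2), (((y / 2) ^+ 2 + b * (y / 2) - k * l * (y / 2) - be) / (l + k)).
    rewrite actB /dB /Aof /Bof /=; congr nfB; fld.
- exists 0, (y / 2), (be - y / 2 * l).
  rewrite actB /dB /Aof /Bof /=; congr nfB; fld.
- exists (y / 2), 0, (- be - k * ((y / 2) ^+ 2 - a * (y / 2))).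
  rewrite actB /dB /Aof /Bof /=; congr nfB; fld.
- exists (y / 2), (be - (y / 2) ^+ 2 + a * (y / 2)), 0.
  rewrite actB /dB /Aof /Bof /=; congr nfB; fld.
Qed.

Definition bz1 (d : option F) (v : F) := if d is Some _ then 0 else v.
Definition bz2 (d : option F) (v : F) := if d is Some _ then v else 0.
Definition baseC d v := nfC d 0 0 (bz1 d v) (bz2 d v).

Lemma invC_base d v : invC a b c d 0 0 (bz1 d v) (bz2 d v) = v.
Proof. by rewrite /invC; case: d => [m|] /=; ring. Qed.

Lemma transC d (y1 y2 z1 z2 : F) :
  exists r s t, act (M r s t) (baseC d (invC a b c d y1 y2 z1 z2)) = nfC d y1 y2 z1 z2.
Proof.
case: d => [m|].
  exists y1, y2, (z1 - (y1 ^+ 2 - a * y1 + y2) * m + (2 * y1 * m + 2 * y2) * y1).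
  by rewrite /baseC actC /Aof /Bof /c3 /invC /=; congr nfC; ring.
exists y1, y2, (2 * y1 * y2 - 2 * y1 * y2 - z2).
by rewrite /baseC actC /Aof /Bof /c3 /invC /=; congr nfC; ring.
Qed.

Lemma nfC_nell d (y1 y2 z1 z2 : F) : nfC d y1 y2 z1 z2 != ell F.
Proof. by apply: (neq_set (mem_span2l _ _)); rewrite in_ell oner_eq0. Qed.
Lemma nfC_line d (y1 y2 z1 z2 : F) : nfC d y1 y2 z1 z2 \in lines F.
Proof. exact: lineP (indepC _ _ _ _ _). Qed.

Lemma orbC_sub d (y1 y2 z1 z2 : F) : orbit (nfC d y1 y2 z1 z2) \subset typeCd d.
Proof. by apply/subsetP => L /orbitP [r [s [t ->]]]; rewrite actC; exact: nfC_type. Qed.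

Lemma orbitsC d : [set X in O | X \subset typeCd d] = [set orbit (baseC d v) | v : F].
Proof.
apply/setP => X; rewrite inE; apply/andP/imsetP => [[XO Xs]|[v _ ->]].
  have [L [Ll Ln EX]] := OP XO; subst X.
  have /typeC_sub [y1 [y2 [z1 [z2 EL]]]] := subsetP Xs _ (mem_orbit a b c L).
  have [r [s [t Et]]] := transC d y1 y2 z1 z2.
  by exists (invC a b c d y1 y2 z1 z2) => //; rewrite EL -Et orbit_act.
by split; [apply: O_mem; [exact: nfC_line | exact: nfC_nell] | exact: orbC_sub].
Qed.

Lemma orbC_inj d v v' : orbit (baseC d v) = orbit (baseC d v') -> v = v'.
Proof.
move=> E.
have : baseC d v' \in orbit (baseC d v) by rewrite E; exact: mem_orbit.
move/orbitP => [r [s [t]]]; rewrite /baseC actC => /nfC_inj [e1 e2 e3 e4].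
have := invC_act a b c r s t d 0 0 (bz1 d v) (bz2 d v).
by rewrite -e3 -e4 -e1 -e2 !invC_base.
Qed.

Lemma card_orbC d (y1 y2 z1 z2 : F) : #|orbit (nfC d y1 y2 z1 z2)| = (#|F| ^ 3)%N.
Proof.
apply: card_orbit => r s t r' s' t'; rewrite !actC => /nfC_inj [e1 e2 e3 e4].
have er : r = r' by apply: (addrI y1).
have es : s = s' by apply: (addrI y2).
subst r' s'; split => //.
case: d e3 e4 => [m|] /= e3 e4.
  by apply: (lin_solve _ e3); rewrite /Aof /=; ring.
by apply: (lin_solve _ (esym e4)); rewrite /Bof /=; ring.
Qed.

Lemma typeC_union d : typeCd d = \bigcup_(X in O | X \subset typeCd d) X.
Proof.
apply/setP => L; apply/idP/bigcupP => [HL|[X /andP [_ Xs] LX]]; last exact: (subsetP Xs).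
have [y1 [y2 [z1 [z2 EL]]]] := typeC_sub HL; subst L.
exists (orbit (nfC d y1 y2 z1 z2)); last exact: mem_orbit.
by rewrite O_mem ?nfC_line ?nfC_nell ?orbC_sub.
Qed.

Definition baseD (k : F * F * F) := nfD k.1.2 k.1.1 0 0 k.2 0.

Lemma transD (u1 u2 u3 v1 v2 v3 : F) :
  exists k r s t, act (M r s t) (baseD k) = nfD u1 u2 u3 v1 v2 v3.
Proof.
exists ((2 * (u2 + v1) - u3 * v3) / 2, (4 * u1 - u3 ^+ 2 + 2 * a * u3 - 2 * v3) / (2 * 2),
        (4 * v2 - v3 ^+ 2 - 2 * b * v3 + 2 * c * u3) / (2 * 2)).
exists (u3 / 2), (v3 / 2), ((2 * (u2 + v1) - u3 * v3) / 2 + 2 * (u3 / 2) * (v3 / 2) - u2).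
rewrite /baseD actD /=; congr nfD; fld.
all: have -> : (4 : F) = 2 * 2 by ring.
all: by rewrite mulf_neq0.
Qed.

Lemma nfD_nell (u1 u2 u3 v1 v2 v3 : F) : nfD u1 u2 u3 v1 v2 v3 != ell F.
Proof. by apply: (neq_set (mem_span2l _ _)); rewrite in_ell oner_eq0 andbF. Qed.
Lemma nfD_line (u1 u2 u3 v1 v2 v3 : F) : nfD u1 u2 u3 v1 v2 v3 \in lines F.
Proof. exact: lineP (indepD _ _ _ _ _ _). Qed.

Lemma orbD_sub (u1 u2 u3 v1 v2 v3 : F) : orbit (nfD u1 u2 u3 v1 v2 v3) \subset typeD F.
Proof. by apply/subsetP => L /orbitP [r [s [t ->]]]; rewrite actD; exact: nfD_type. Qed.

Lemma orbitsD : [set X in O | X \subset typeD F] = [set orbit (baseD k) | k : F * F * F].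
Proof.
apply/setP => X; rewrite inE; apply/andP/imsetP => [[XO Xs]|[k _ ->]].
  have [L [Ll Ln EX]] := OP XO; subst X.
  have /typeD_sub [u1 [u2 [u3 [v1 [v2 [v3 EL]]]]]] := subsetP Xs _ (mem_orbit a b c L).
  have [k [r [s [t Et]]]] := transD u1 u2 u3 v1 v2 v3.
  by exists k => //; rewrite EL -Et orbit_act.
by split; [apply: O_mem; [exact: nfD_line | exact: nfD_nell] | exact: orbD_sub].
Qed.

Lemma orbD_inj k k' : orbit (baseD k) = orbit (baseD k') -> k = k'.
Proof.
move=> E.
have : baseD k' \in orbit (baseD k) by rewrite E; exact: mem_orbit.
move/orbitP => [r [s [t]]]; rewrite /baseD actD.
move=> /nfD_inj [[e1 e2 e3] [e4 e5 e6]].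
have r0 : r = 0 by move: e3; simp => /esym/eqP; rewrite mulf_eq0 (negPf H2) => /eqP.
have s0 : s = 0 by move: e6; simp => /esym/eqP; rewrite mulf_eq0 (negPf H2) => /eqP.
subst r s; move: e4; simp => t0; subst t.
clear E; case: k k' e1 e2 e5 => [[k1 k2] k3] [[k1' k2'] k3'] /=.
by rewrite !(mulr0, addr0, expr0n, subr0) /= => -> -> ->.
Qed.

Lemma card_orbD (u1 u2 u3 v1 v2 v3 : F) : #|orbit (nfD u1 u2 u3 v1 v2 v3)| = (#|F| ^ 3)%N.
Proof.
apply: card_orbit => r s t r' s' t'; rewrite !actD => /nfD_inj [[e1 e2 e3] [e4 e5 e6]].
have er : r = r'.
  by move/addrI/eqP: e3; rewrite -subr_eq0 -mulrBr mulf_eq0 (negPf H2) subr_eq0 => /eqP.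
have es : s = s'.
  by move/addrI/eqP: e6; rewrite -subr_eq0 -mulrBr mulf_eq0 (negPf H2) subr_eq0 => /eqP.
subst r' s'; split => //.
by apply: (lin_solve _ (esym e2)); ring.
Qed.

Lemma typeD_union : typeD F = \bigcup_(X in O | X \subset typeD F) X.
Proof.
apply/setP => L; apply/idP/bigcupP => [HL|[X /andP [_ Xs] LX]]; last exact: (subsetP Xs).
have [u1 [u2 [u3 [v1 [v2 [v3 EL]]]]]] := typeD_sub HL; subst L.
exists (orbit (nfD u1 u2 u3 v1 v2 v3)); last exact: mem_orbit.
by rewrite O_mem ?nfD_line ?nfD_nell ?orbD_sub.
Qed.

Lemma spread_alg (α β r s t u3 v3 : F) :
  α * (2 * r) + β * (2 * s) = 0 ->
  α * (r * u3 + (r ^+ 2 - a * r + s)) + β * (r * v3 + t) = 0 ->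
  α * (s * u3 + (2 * r * s - t)) + β * (s * v3 + (s ^+ 2 + b * s - c * r)) = 0 ->
  (α = 0 /\ β = 0) \/ [/\ r = 0, s = 0 & t = 0].
Proof.
move=> e2 e0 e1.
have E3 : α * r + β * s = 0.
  apply/eqP; move/eqP: e2; rewrite (_ : _ + _ = 2 * (α * r + β * s)); last by ring.
  by rewrite mulf_eq0 (negPf H2).
have star : α ^+ 2 * (s - a * r) + β ^+ 2 * (b * s - c * r) = 0.
  rewrite (_ : _ + _ = α * (α * (r * u3 + (r ^+ 2 - a * r + s)) + β * (r * v3 + t))
     + β * (α * (s * u3 + (2 * r * s - t)) + β * (s * v3 + (s ^+ 2 + b * s - c * r)))
     - (α * u3 + β * v3 + α * r + β * s) * (α * r + β * s)); last by ring.
  by rewrite e0 e1 E3; ring.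
case: (eqVneq β 0) => [β0|βn].
  subst β; case: (eqVneq α 0) => [α0|αn]; first by left.
  right; move: E3; simp => /eqP; rewrite mulf_eq0 (negPf αn) => /eqP r0; subst r.
  move: star; simp; rewrite expr0n /= mul0r addr0 => /eqP; rewrite mulf_eq0 expf_eq0 (negPf αn) /=.
  move=> /eqP s0; subst s; split => //.
  by move: e1; simp; rewrite ?expr0n /=; simp => /eqP; rewrite mulrN oppr_eq0 mulf_eq0 (negPf αn) => /eqP.
right.
have Qn : α ^+ 3 + a * α ^+ 2 * β + b * α * β ^+ 2 + c * β ^+ 3 != 0.
  rewrite (_ : _ + _ = β ^+ 3 * ((α / β) ^+ 3 + a * (α / β) ^+ 2 + b * (α / β) + c)); last by fld.
  by rewrite mulf_neq0 ?expf_neq0.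
have r0 : r = 0.
  apply: (mulIf Qn); rewrite mul0r.
  rewrite /= (_ : r * (α ^+ 3 + a * α ^+ 2 * β + b * α * β ^+ 2 + c * β ^+ 3) = (α ^+ 2 + b * β ^+ 2) * (α * r + β * s) - β * (α ^+ 2 * (s - a * r) + β ^+ 2 * (b * s - c * r))); last by ring.
  by rewrite E3 star; simp; rewrite oppr0.
subst r; move: E3; simp => /eqP; rewrite mulf_eq0 (negPf βn) => /eqP s0; subst s.
by split => //; move: e0; simp; rewrite ?expr0n /=; simp => /eqP; rewrite mulf_eq0 (negPf βn) => /eqP.
Qed.

Lemma mem_span2_0 (u v : vec F) : 0 \in span2 u v.
Proof. by apply/span2P; exists 0, 0; rewrite !scale0r addr0. Qed.

Lemma spreadD (u1 u2 u3 v1 v2 v3 r s t : F) :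
  act (M r s t) (nfD u1 u2 u3 v1 v2 v3) != nfD u1 u2 u3 v1 v2 v3 ->
  nfD u1 u2 u3 v1 v2 v3 :&: act (M r s t) (nfD u1 u2 u3 v1 v2 v3) = zero_sp F.
Proof.
move=> Ln; rewrite actD in Ln *.
apply/setP => z; rewrite in_setI in_set1; apply/andP/eqP => [[]|->]; last by rewrite !mem_span2_0.
move/span2P => [α [β ->]] /span2P [α' [β' E]].
move: E; rewrite !v5_comb => /v5_inj [e0 e1 e2 e3 e4].
move: e3 e4; simp => e3 e4; subst α' β'.
have h2 : α * (2 * r) + β * (2 * s) = 0 by apply: (lin_solve _ (esym e2)); ring.
have h0 : α * (r * u3 + (r ^+ 2 - a * r + s)) + β * (r * v3 + t) = 0.
  by apply: (lin_solve _ (esym e0)); ring.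
have h1 : α * (s * u3 + (2 * r * s - t)) + β * (s * v3 + (s ^+ 2 + b * s - c * r)) = 0.
  by apply: (lin_solve _ (esym e1)); ring.
case: (spread_alg h2 h0 h1) => [[-> ->]|[r0 s0 t0]]; first by simp; rewrite [RHS]v5_0.
subst r s t; exfalso; move: Ln; rewrite -actD act0 eqxx.
done.
Qed.

Lemma orbD_spread X : X \in O -> X \subset typeD F -> partial_spread X.
Proof.
move=> XO Xs L1 L2 L1X L2X Ln.
have [L [Ll Ln' EX]] := OP XO; subst X.
have /typeD_sub [u1 [u2 [u3 [v1 [v2 [v3 EL]]]]]] := subsetP Xs _ (mem_orbit a b c L).
subst L.
have L2X' : L2 \in orbit L1 by rewrite (orbit_mem_eq L1X).
move/orbitP: L1X => [r1 [s1 [t1 E1]]]; rewrite actD in E1; subst L1.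
move/orbitP: L2X' => [r [s [t E2]]]; subst L2.
by apply: spreadD; rewrite eq_sym.
Qed.
End Main.

End MI.
Import MI.

Module MJ.
Set Implicit Arguments. Unset Strict Implicit. Unset Printing Implicit Defensive.
Import GRing.Theory.
Local Open Scope ring_scope.
Set Implicit Arguments. Unset Strict Implicit. Unset Printing Implicit Defensive.
Ltac simp := rewrite ?(mulr0, mulr1, addr0, add0r, mul0r, mul1r, subr0, eqxx, oner_eq0, andbT, andbF).
Section Misc.
Variable F : finFieldType.

Lemma irr_noroot (a b c : F) :
  irreducible_poly ('X^3 + a%:P * 'X^2 + b%:P * 'X + c%:P) ->
  forall x : F, x ^+ 3 + a * x ^+ 2 + b * x + c != 0.
Proof.
move=> irr x; apply/negP => /eqP r.
set p := ('X^3 + a%:P * 'X^2 + b%:P * 'X + c%:P).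
have rp : root p x.
  by rewrite /root /p !(hornerD, hornerCM, hornerXn, hornerX, hornerC) r.
have sp : (3 < size p)%N.
  rewrite ltnNge; apply/negP => /(nth_default 0); rewrite /p !coefE /=; simp.
  by move/eqP; rewrite oner_eq0.
have := rp; rewrite -dvdp_XsubCl => /(irredp_XsubCP irr) [] /eqp_size; rewrite size_XsubC.
  by rewrite size_poly1.
by move=> e; rewrite -e in sp.
Qed.

Lemma two_neq0 (p : nat) : prime p -> odd p -> p \in [pchar F] -> (2 : F) != 0.
Proof.
move=> pp po pc; rewrite -(dvdn_pcharf pc 2).
apply/negP => /(dvdn_leq (isT : (0 < 2)%N)); rewrite leq_eqVlt => /orP [/eqP p2|].
  by move: po; rewrite p2.
by rewrite ltnS leq_eqVlt ltnS leqn0 => /orP [/eqP p1|/eqP p0]; move: pp; rewrite ?p1 ?p0.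
Qed.
End Misc.

End MJ.
Import MJ.

Module MK.
Set Implicit Arguments. Unset Strict Implicit. Unset Printing Implicit Defensive.
Import GRing.Theory.
Local Open Scope ring_scope.
Set Implicit Arguments. Unset Strict Implicit. Unset Printing Implicit Defensive.
Ltac simp := rewrite ?(mulr0, mulr1, addr0, add0r, mul0r, mul1r, subr0, eqxx, oner_eq0, andbT, andbF).
Section Pts.
Variable F : finFieldType.
Local Notation coord := Defs.coord.

Lemma span1_scale (x : vec F) k : k != 0 -> span1 (k *: x) = span1 x.
Proof.
move=> kn; apply/setP => z; apply/span1P/span1P => [[l ->]|[l ->]].
  by exists (l * k); rewrite scalerA.
by exists (l / k); rewrite scalerA mulfVK.
Qed.

Lemma ell_pointsE : ell_points F = [set span1 (pv o) | o : option F].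
Proof.
apply/setP => P; rewrite inE; apply/andP/imsetP => [[Pp Ps]|[o _ ->]].
  move: Pp; rewrite inE => /existsP [x /andP [xn /eqP EP]]; subst P.
  rewrite [x]v5E in xn Ps *.
  move: (coord x 0) (coord x 1) (coord x 2) (coord x 3) (coord x 4) xn Ps => x0 x1 x2 x3 x4 xn Ps.
  have := subsetP Ps _ (mem_span1 _); rewrite in_ell => /and3P [/eqP e2 /eqP e3 /eqP e4]; subst.
  have m01 : (x0 != 0) || (x1 != 0).
    by move: xn; apply: contraNT => /norP [/negPn/eqP -> /negPn/eqP ->]; rewrite -v5_0.
  have [o [τ [τn Eτ]]] := pt_exists m01.
  by exists o => //; rewrite Eτ span1_scale.
split.
  by rewrite inE; apply/existsP; exists (pv o); rewrite pv_neq0 eqxx.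
by apply/subsetP => z /span1P [k ->]; rewrite pvE v5_scale in_ell; simp.
Qed.

Lemma span1_pv_inj (o o' : option F) : span1 (pv o) = span1 (pv o') -> o = o'.
Proof.
move=> E; have : pv o \in span1 (pv o') by rewrite -E mem_span1.
by move/span1P => [k]; apply: pv_scale_inj.
Qed.

Lemma card_ell_points : #|ell_points F| = #|F|.+1.
Proof.
rewrite ell_pointsE card_imset ?card_option //.
by move=> o o' /span1_pv_inj.
Qed.

Definition dir (w : F) (i : nat) : option F :=
  if (i < #|F|)%N then Some (w ^+ i.-1) else if i == #|F| then Some 0 else None.

Lemma solid_dir w i : solid w i = solidd (dir w i).
Proof.
rewrite /solid /dir /solidd; case: ifP => _; last case: ifP => _;
  by apply/setP => x; rewrite !inE /=; simp; rewrite // eq_sym.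
Qed.

Variable w : F.
Hypothesis w_prim : (#|F|.-1).-primitive_root w.

Lemma dir_inj i j : (1 <= i <= #|F|.+1)%N -> (1 <= j <= #|F|.+1)%N -> dir w i = dir w j -> i = j.
Proof.
have q1 := prim_order_gt0 w_prim.
have wn : w != 0.
  apply/eqP => w0; have := prim_expr_order w_prim; rewrite w0 expr0n.
  by rewrite -(prednK q1) /= => /eqP; rewrite eq_sym oner_eq0.
move=> /andP [i1 iq] /andP [j1 jq]; rewrite /dir.
case: (ltnP i #|F|) => iq'; case: (ltnP j #|F|) => jq'.
- move=> [] /eqP; rewrite (eq_prim_root_expr w_prim) !modn_small; [move=> /eqP; lia | lia | lia].
- case: eqP => // _ [] /eqP; rewrite expf_eq0 (negPf wn) andbF //.
- case: eqP => // _ [] /esym /eqP; rewrite expf_eq0 (negPf wn) andbF //.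
- by case: eqP; case: eqP => //; lia.
Qed.

Lemma dir_surj d : exists i, (1 <= i <= #|F|.+1)%N /\ dir w i = d.
Proof.
have q1 := prim_order_gt0 w_prim.
case: d => [m|]; last first.
  exists #|F|.+1; split; first lia.
  by rewrite /dir; case: ifP => [|_]; [lia | case: eqP => //; lia].
case: (eqVneq m 0) => [->|mn].
  by exists #|F|; split; [lia | rewrite /dir ltnn eqxx].
have m1 : m ^+ #|F|.-1 = 1.
  apply: (mulIf mn); rewrite mul1r -exprSr prednK ?expf_card //; lia.
have [k Ek] := prim_rootP w_prim m1.
exists k.+1.
have Hk : (k.+1 < #|F|)%N.
  by have := ltn_ord k; move: (nat_of_ord k) => n; rewrite -subn1 ltn_subRL add1n.
split; first by rewrite /= (leq_trans (ltnW Hk)) // leqnSn.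
by rewrite /dir Hk /= Ek.
Qed.
End Pts.

End MK.
Import MK.

Module MMain.
Import GRing.Theory.
Local Open Scope ring_scope.
Section Fin.
Variable F : finFieldType.
Variables a b c : F.

Lemma typeA_orbit o : typeA (span1 (pv o)) = Defs.orbit a b c (nfA o 0).
Proof. by rewrite typeA_eq orbitA. Qed.
Lemma typeB_orbit (H2 : (2 : F) != 0) (Hirr : forall x : F, x ^+ 3 + a * x ^+ 2 + b * x + c != 0) d o : typeBd d (span1 (pv o)) = Defs.orbit a b c (nfB d o 0 0).
Proof. by rewrite typeB_eq (orbitB H2 Hirr). Qed.
Lemma typeB_dir (w : F) i (P : {set vec F}) : typeB w i P = typeBd (dir w i) P.
Proof. by rewrite /typeB /typeBd solid_dir. Qed.
Lemma typeC_dir (w : F) i : typeC w i = typeCd (dir w i).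
Proof. by rewrite /typeC /typeCd solid_dir. Qed.
Lemma nfA_nell o (u : F) : nfA o u != ell F.
Proof. by have := nfA_type o u; rewrite inE => /andP [_ /and3P []]. Qed.
Lemma nfB_nell d o (be y : F) : nfB d o be y != ell F.
Proof. by apply: (neq_set (mem_span2r _ _)); rewrite w3E in_ell; case: d => [m|] /=; rewrite ?oner_eq0 ?andbF. Qed.
End Fin.

End MMain.
Import MMain.

Unset Implicit Arguments.
Set Strict Implicit.

Theorem lemma2p4 (F : finFieldType) (p : nat)
  (p_prime : prime p) (p_odd : odd p) (p_char : p \in [pchar F])
  (w : F) (w_prim : (#|F|.-1).-primitive_root w)
  (a b c : F)
  (irr : irreducible_poly ('X^3 + a%:P * 'X^2 + b%:P * 'X + c%:P)) :
  let q := #|F| in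
  let O := line_orbits a b c in
  (* (a) *)
  (forall P, P \in ell_points F -> typeA P \in O /\ #|typeA P| = q) /\
  #|[set typeA P | P in ell_points F]| = q.+1 /\
  (* (b) *)
  (forall i P, (1 <= i <= q.+1)%N -> P \in ell_points F ->
     typeB w i P \in O /\ #|typeB w i P| = (q ^ 2)%N) /\
  #|[set typeB w (nat_of_ord i).+1 P | i in [set: 'I_(q.+1)], P in ell_points F]| = (q.+1 ^ 2)%N /\
  (* (c) *)
  (forall i, (1 <= i <= q.+1)%N ->
     #|[set X in O | X \subset typeC w i]| = q /\
     (forall X, X \in O -> X \subset typeC w i -> #|X| = (q ^ 3)%N) /\
     typeC w i = \bigcup_(X in O | X \subset typeC w i) X) /\
  (* (d) *)
  #|[set X in O | X \subset typeD F]| = (q ^ 3)%N /\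
  (forall X, X \in O -> X \subset typeD F -> #|X| = (q ^ 3)%N /\ partial_spread X) /\
  typeD F = \bigcup_(X in O | X \subset typeD F) X /\
  (* these are all the orbits on lines other than ell *)
  (forall X, X \in O ->
     (exists2 P, P \in ell_points F & X = typeA P) \/
     (exists i P, [/\ (1 <= i <= q.+1)%N, P \in ell_points F & X = typeB w i P]) \/
     (exists2 i, (1 <= i <= q.+1)%N & X \subset typeC w i) \/
     X \subset typeD F).
Proof.
move=> q O; rewrite /O /q; clear O q.
have H2 := two_neq0 p_prime p_odd p_char.
have Hirr := irr_noroot irr.
split.
  move=> P; rewrite ell_pointsE => /imsetP [o _ ->]; split.
    by rewrite (typeA_orbit _ a b c); apply: O_mem; [exact: lineP (indepA _ _) | exact: nfA_nell].
  by rewrite typeA_eq card_imset //; move=> u u'; apply: nfA_inj.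
split.
  rewrite ell_pointsE -imset_comp card_imset ?card_option // => o o' /= E.
  have : nfA o 0 \in typeA (span1 (pv o')) by rewrite -E; exact: nfA_type.
  rewrite inE => /andP [_ /and3P [_ PL _]].
  by have /pvA -> := subsetP PL _ (mem_span1 (pv o')).
split.
  move=> i P /andP [i1 iq]; rewrite ell_pointsE => /imsetP [o _ ->].
  rewrite typeB_dir; split.
    rewrite (typeB_orbit _ _ _ _ H2 Hirr); apply: O_mem; [exact: lineP (indepB _ _ _ _) | exact: nfB_nell].
  rewrite typeB_eq card_imset ?card_prod ?expnS ?expn0 ?muln1 //.
  by move=> [be y] [be' y'] /= /nfB_inj [-> ->].
split.
  rewrite curry_imset2X card_in_imset ?cardsX ?cardsT ?card_ord ?card_ell_points ?expnS ?expn0 ?muln1 //.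
  move=> [i P] [j P'] /=; rewrite !in_setX !in_setT /= => HP HP'.
  move: HP HP'; rewrite !ell_pointsE => /imsetP [o _ ->] /imsetP [o' _ ->].
  rewrite !typeB_dir => E.
  have : nfB (dir w i.+1) o 0 0 \in typeBd (dir w j.+1) (span1 (pv o')) by rewrite -E; exact: nfB_type.
  rewrite inE => /andP [_ /and3P [Ls PL _]].
  have /pvB eo := subsetP PL _ (mem_span1 (pv o')); subst o'.
  have := subsetP Ls _ (mem_span2r _ _); rewrite w3E in_solidd => /eqP /dd_eq ed.
  have := dir_inj w_prim _ _ ed; rewrite !ltn0Sn /= !ltn_ord => /(_ isT isT) [] eij.
  by congr pair; apply: val_inj.
split.
  move=> i /andP [i1 iq]; rewrite typeC_dir; split; [|split].
  - by rewrite orbitsC card_imset //; move=> v v'; apply: orbC_inj.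
  - move=> X XO Xs; have [L [Ll Ln EX]] := OP XO; subst X.
    have /typeC_sub [y1 [y2 [z1 [z2 EL]]]] := subsetP Xs _ (mem_orbit a b c L).
    by rewrite EL card_orbC.
  - exact: typeC_union.
split.
  rewrite (orbitsD _ _ _ H2) card_imset ?card_prod ?expnS ?expn0 ?muln1 ?mulnA //.
  by move=> k k'; apply: (orbD_inj H2).
split.
  move=> X XO Xs; split; last exact: (orbD_spread H2 Hirr).
  have [L [Ll Ln EX]] := OP XO; subst X.
  have /typeD_sub [u1 [u2 [u3 [v1 [v2 [v3 EL]]]]]] := subsetP Xs _ (mem_orbit a b c L).
  by rewrite EL (card_orbD _ _ _ H2).
split; first exact: typeD_union.
move=> X XO; have [L [Ll Ln ->]] := OP XO.
case: (classify Ll Ln) => [[o [u ->]]|[d [o [be [y ->]]]]|[d [y1 [y2 [z1 [z2 ->]]]]]|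
  [u1 [u2 [u3 [v1 [v2 [v3 ->]]]]]]].
- left; exists (span1 (pv o)); first by rewrite ell_pointsE; apply/imsetP; exists o.
  rewrite (typeA_orbit _ a b c); apply: orbit_mem_eq; rewrite orbitA; apply/imsetP; by exists u.
- right; left; have [i [Hi Ei]] := dir_surj w_prim d.
  exists i, (span1 (pv o)); split => //; first by rewrite ell_pointsE; apply/imsetP; exists o.
  rewrite typeB_dir Ei (typeB_orbit _ _ _ _ H2 Hirr); apply: orbit_mem_eq.
  rewrite (orbitB H2 Hirr); apply/imsetP; by exists (be, y).
- right; right; left; have [i [Hi Ei]] := dir_surj w_prim d.
  by exists i => //; rewrite typeC_dir Ei; exact: orbC_sub.
- by right; right; right; exact: orbD_sub.
Qed.
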